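(* Let $r_1,r_2,r_3,L,M>0$ with $r_2>\max(r_1,r_3)$, and let $\lambda_1$, $\varphi_1$, $F$ be as in the context. Let $c_A>2\sqrt{-\lambda_1}$, let $0<T\le+\infty$, and let $A\in\mathcal C(\mathbb{R},[0,+\infty))$ with $A(t)=c_At$ for $t\in[0,T)$. Let $r(t,x)=r_1$ if $x<A(t)$, $r_2$ if $A(t)\le x<A(t)+L$, $r_3$ if $x\ge A(t)+L$, and let $f$ be globally bounded in $(t,x)$, $\mathcal C^2$ in $u$, with $f(t,x,0)=0$, $\partial_uf(t,x,0)=r(t,x)$, $r(t,x)u\ge f(t,x,u)\ge r(t,x)u-Mu^2$ for $u\ge0$, and $f(t,x,u)<0$ for $u>1$. Let $c=F(c_A)$ if $c_A<2\sqrt{r_1}+2\sqrt{-\lambda_1-r_1}$ and $c=2\sqrt{r_1}$ if $c_A\ge2\sqrt{r_1}+2\sqrt{-\lambda_1-r_1}$, let $\lambda(c)=\frac12(c-\sqrt{c^2-4r_1})$, and define $$\overline{u}(t,x)=\begin{cases}2 & x\le ct-\frac{\ln2}{\lambda(c)},\\ e^{-\lambda(c)(x-ct)} & ct-\frac{\ln 2}{\lambda(c)}<x<c_At,\\ e^{-\lambda(c)(c_A-c)t}e^{-\frac{c_A(x-c_At)}{2}}\varphi_1\big(\frac{x-c_At}{L}\big) & x\ge c_At.\end{cases}$$ Then for every constant $C\ge1$, $C\overline{u}$ is a (generalized) super-solution of $\partial_tu=\partial_{xx}u+f(t,x,u)$ for $t\in[0,T)$, $x\in\mathbb{R}$.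
   Context: Let $\underline{L}=0$ if $r_1=r_3$ and $\underline{L}=\frac{1}{\sqrt{r_2-\max(r_1,r_3)}}\operatorname{arccot}\big(\sqrt{\frac{r_2-\max(r_1,r_3)}{|r_1-r_3|}}\big)$ otherwise ($\operatorname{arccot}$ the inverse of $\cot|_{(0,\pi)}$). $\lambda_1=-\max(r_1,r_3)$ if $L\le\underline{L}$; if $L>\underline{L}$, $\lambda_1$ is the unique solution in $(-r_2,\min(-\max(r_1,r_3),\pi^2/L^2-r_2))$ of $\cot(L\sqrt{r_2+\lambda_1})=\frac{r_2+\lambda_1-\sqrt{(r_1+\lambda_1)(r_3+\lambda_1)}}{\sqrt{r_2+\lambda_1}(\sqrt{-r_1-\lambda_1}+\sqrt{-r_3-\lambda_1})}$. $F(c)=\frac{c-2\sqrt{-\lambda_1-r_1}}{2}+\frac{2r_1}{c-2\sqrt{-\lambda_1-r_1}}$ for $c>2\sqrt{-\lambda_1-r_1}$. The function $\varphi_1$ (a positive $\mathcal C^1$ solution of $-L^{-2}\varphi''-m\varphi=\lambda_1\varphi$ with $m=r_1\mathbf 1_{y<0}+r_2\mathbf 1_{0\le y<1}+r_3\mathbf 1_{y\ge1}$, normalized by $\varphi_1(0)=1$) is: (1) if $L>\underline{L}$: with $C_3\in(0,\pi/2)$ given by $\cot C_3=\sqrt{(-r_1-\lambda_1)/(r_2+\lambda_1)}$, $\varphi_1(y)=e^{L\sqrt{-r_1-\lambda_1}\,y}$ for $y\le0$, $\varphi_1(y)=\sin(L\sqrt{r_2+\lambda_1}\,y+C_3)/\sin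 C_3$ for $0<y<1$, $\varphi_1(y)=\frac{\sin(L\sqrt{r_2+\lambda_1}+C_3)}{\sin C_3}e^{-L\sqrt{-r_3-\lambda_1}(y-1)}$ for $y\ge1$; (2) if $r_1<r_3$ and $L\le\underline{L}$ (so $\lambda_1=-r_3$): with $C_3\in(0,\pi/2)$, $\cot C_3=\sqrt{(r_3-r_1)/(r_2-r_3)}$, $\varphi_1(y)=e^{L\sqrt{r_3-r_1}\,y}$ for $y\le0$, $\sin(L\sqrt{r_2-r_3}\,y+C_3)/\sin C_3$ for $0<y<1$, and $\frac{\sin(L\sqrt{r_2-r_3}+C_3)}{\sin C_3}+\frac{\sqrt{r_2-r_3}\cos(L\sqrt{r_2-r_3}+C_3)}{\sin C_3}L(y-1)$ for $y\ge1$; (3) if $r_1>r_3$ and $L\le\underline{L}$ (so $\lambda_1=-r_1$): $\varphi_1(y)=\psi(1-y)/\psi(1)$ where $\psi$ is the function of case (2) with $r_1$ and $r_3$ interchanged. A (generalized) super-solution is a continuous function, smooth on finitely many space-time regions separated by $\mathcal C^1$ curves, satisfying $\partial_t\overline u\ge\partial_{xx}\overline u+f(t,x,\overline u)$ in each region and $\partial_x\overline u(t,x^-)\ge\partial_x\overline u(t,x^+)$ across each interface. *)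

(* Defs.v *)
From Stdlib Require Import Reals Lra.
From Coquelicot Require Import Coquelicot.
Open Scope R_scope.

(* arccot = inverse of cot restricted to (0,pi) *)
Definition arccot (y : R) : R := PI / 2 - atan y.

Definition Lbar (r1 r2 r3 : R) : R :=
  if Req_EM_T r1 r3 then 0
  else / sqrt (r2 - Rmax r1 r3) *
       arccot (sqrt ((r2 - Rmax r1 r3) / Rabs (r1 - r3))).

(* lambda_1 is characterized by its defining property (the paper proves the
   solution in the case L > Lbar is unique). *)
Definition lambda1_spec (r1 r2 r3 L l : R) : Prop :=
  (L <= Lbar r1 r2 r3 /\ l = - Rmax r1 r3) \/
  (Lbar r1 r2 r3 < L /\ - r2 < l /\
   l < Rmin (- Rmax r1 r3) (PI ^ 2 / L ^ 2 - r2) /\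
   cos (L * sqrt (r2 + l)) / sin (L * sqrt (r2 + l)) =
   (r2 + l - sqrt ((r1 + l) * (r3 + l))) /
   (sqrt (r2 + l) * (sqrt (- r1 - l) + sqrt (- r3 - l)))).

Definition Ffun (r1 l c : R) : R :=
  (c - 2 * sqrt (- l - r1)) / 2 + 2 * r1 / (c - 2 * sqrt (- l - r1)).

Definition phi_case1 (r1 r2 r3 L l y : R) : R :=
  let C3 := arccot (sqrt ((- r1 - l) / (r2 + l))) in
  if Rle_dec y 0 then exp (L * sqrt (- r1 - l) * y)
  else if Rlt_dec y 1 then sin (L * sqrt (r2 + l) * y + C3) / sin C3
  else sin (L * sqrt (r2 + l) + C3) / sin C3 *
       exp (- L * sqrt (- r3 - l) * (y - 1)).

Definition phi_case2 (r1 r2 r3 L y : R) : R :=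
  let C3 := arccot (sqrt ((r3 - r1) / (r2 - r3))) in
  if Rle_dec y 0 then exp (L * sqrt (r3 - r1) * y)
  else if Rlt_dec y 1 then sin (L * sqrt (r2 - r3) * y + C3) / sin C3
  else sin (L * sqrt (r2 - r3) + C3) / sin C3 +
       sqrt (r2 - r3) * cos (L * sqrt (r2 - r3) + C3) / sin C3 * (L * (y - 1)).

(* varphi_1 (the remaining case r1 = r3, L <= Lbar = 0 cannot occur since L > 0) *)
Definition phi1 (r1 r2 r3 L l y : R) : R :=
  if Rle_dec L (Lbar r1 r2 r3) then
    (if Rlt_dec r1 r3 then phi_case2 r1 r2 r3 L y
     else if Rlt_dec r3 r1 then phi_case2 r3 r2 r1 L (1 - y) / phi_case2 r3 r2 r1 L 1
     else 0)
  else phi_case1 r1 r2 r3 L l y.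

Definition cspeed (r1 l cA : R) : R :=
  if Rlt_dec cA (2 * sqrt r1 + 2 * sqrt (- l - r1)) then Ffun r1 l cA
  else 2 * sqrt r1.

Definition lam (r1 c : R) : R := (c - sqrt (c ^ 2 - 4 * r1)) / 2.

Definition ubar (r1 r2 r3 L l cA : R) (t x : R) : R :=
  let c := cspeed r1 l cA in
  let lc := lam r1 c in
  if Rle_dec x (c * t - ln 2 / lc) then 2
  else if Rlt_dec x (cA * t) then exp (- lc * (x - c * t))
  else exp (- lc * (cA - c) * t) * exp (- cA * (x - cA * t) / 2) *
       phi1 r1 r2 r3 L l ((x - cA * t) / L).

Definition rfun (r1 r2 r3 L : R) (A : R -> R) (t x : R) : R :=
  if Rlt_dec x (A t) then r1
  else if Rlt_dec x (A t + L) then r2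
  else r3.

Definition in_time (T : Rbar) (t : R) : Prop := 0 <= t /\ Rbar_lt (Finite t) T.

(* the i-th region (0 <= i <= k) between consecutive interface curves
   g 0 < g 1 < ... < g (k-1); region 0 is left of g 0, region k right of g (k-1). *)
Definition in_region (k : nat) (g : nat -> R -> R) (i : nat) (t x : R) : Prop :=
  (i = 0%nat \/ g (pred i) t < x) /\ (i = k \/ x < g i t).

Definition dt (u : R -> R -> R) (t x : R) : R := Derive (fun s => u s x) t.
Definition dx (u : R -> R -> R) (t x : R) : R := Derive (fun y => u t y) x.
Definition dxx (u : R -> R -> R) (t x : R) : R := Derive (fun y => dx u t y) x.

Definition uncurry (v : R -> R -> R) : R * R -> R := fun p => v (fst p) (snd p).

Definition C12_at (u : R -> R -> R) (t x : R) : Prop :=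
  ex_derive (fun s => u s x) t /\
  locally x (fun y => ex_derive (fun z => u t z) y) /\
  ex_derive (fun y => dx u t y) x /\
  continuous (uncurry (dt u)) (t, x) /\
  continuous (uncurry (dx u)) (t, x) /\
  continuous (uncurry (dxx u)) (t, x).

Definition gen_supersol (f : R -> R -> R -> R) (T : Rbar) (u : R -> R -> R) : Prop :=
  (forall t x, in_time T t -> continuous (uncurry u) (t, x)) /\
  exists (k : nat) (g : nat -> R -> R),
    (forall i s, (i < k)%nat -> ex_derive (g i) s /\ continuous (Derive (g i)) s) /\
    (forall i t, (S i < k)%nat -> in_time T t -> g i t < g (S i) t) /\
    (forall i t x, (i <= k)%nat -> in_time T t -> in_region k g i t x ->
       C12_at u t x /\ dt u t x >= dxx u t x + f t x (u t x)) /\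
    (forall i t, (i < k)%nat -> in_time T t ->
       exists dl dr : R,
         filterlim (fun y => dx u t y) (at_left (g i t)) (locally dl) /\
         filterlim (fun y => dx u t y) (at_right (g i t)) (locally dr) /\
         dr <= dl).

(* Main.v *)
Require Import Defs.
From Stdlib Require Import Reals Lra Lia.
From Coquelicot Require Import Coquelicot.
Open Scope R_scope.


Lemma loc_R x eps (P:R->Prop): 0<eps -> (forall y, Rabs(y-x)<eps -> P y) -> locally x P.
Proof.
  intros He H. exists (mkposreal eps He). intros y Hy. apply H. exact Hy.
Qed.

Lemma loc_R2 t x eps (P:R*R->Prop): 0<eps ->
  (forall s y, Rabs(s-t)<eps -> Rabs(y-x)<eps -> P (s,y)) -> locally (t,x) P.
Proof.
  intros He H. exists (mkposreal eps He). intros [s y] [Hs Hy]. apply H; assumption.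
Qed.

Lemma cont_der (f : R -> R) x : ex_derive f x -> continuous f x.
Proof. intro H. apply (ex_derive_continuous (K:=R_AbsRing) (V:=R_NormedModule)). exact H. Qed.

Lemma cont_lin2 (be : R) : forall p : R*R, continuous (fun p : R*R => snd p - be * fst p) p.
Proof.
  intros [s y].
  apply (continuous_plus (fun p : R*R => snd p) (fun p : R*R => - (be * fst p))).
  apply continuous_snd.
  apply (continuous_comp (fun p : R*R => fst p) (fun a => - (be * a))).
  apply continuous_fst.
  apply cont_der. auto_derive. auto.
Qed.

Lemma cont_Vf K al be (q : R -> R) : (forall z, continuous q z) ->
  forall p : R*R, continuous (fun p : R*R => K * exp (al * fst p) * q (snd p - be * fst p)) p.
Proof.
  intros Hq [s y].
  apply (continuous_mult (fun p : R*R => K * exp (al * fst p)) (fun p : R*R => q (snd p - be * fst p))).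
  - apply (continuous_comp (fun p : R*R => fst p) (fun a => K * exp (al * a))).
    apply continuous_fst. apply cont_der. auto_derive. auto.
  - apply (continuous_comp (fun p : R*R => snd p - be * fst p) q).
    apply cont_lin2. apply Hq.
Qed.

Definition Vf K al be (h : R -> R) (s y : R) := K * exp (al * s) * h (y - be * s).

Lemma isd_mult (f g : R -> R) x df dg : is_derive f x df -> is_derive g x dg ->
  is_derive (fun y => f y * g y) x (df * g x + f x * dg).
Proof. intros H1 H2. apply (is_derive_mult f g x df dg H1 H2). intros; apply Rmult_comm. Qed.

Lemma isd_comp (f g : R -> R) x df dg : is_derive f (g x) df -> is_derive g x dg ->
  is_derive (fun y => f (g y)) x (dg * df).
Proof. intros H1 H2. apply (is_derive_comp f g x df dg H1 H2). Qed.

Lemma isd_eq (f : R -> R) x l l' : is_derive f x l -> l = l' -> is_derive f x l'.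
Proof. intros H ->; exact H. Qed.

Lemma Vf_dt K al be h h1 s y : (forall z, is_derive h z (h1 z)) ->
  is_derive (fun s => Vf K al be h s y) s
    (K * exp (al * s) * (al * h (y - be * s) - be * h1 (y - be * s))).
Proof.
  intros Hh. unfold Vf. eapply isd_eq. apply isd_mult.
  - auto_derive. auto. reflexivity.
  - apply (isd_comp h (fun s => y - be * s)). apply Hh. auto_derive. auto. reflexivity.
  - simpl. ring.
Qed.

Lemma Vf_dx K al be h h1 s y : (forall z, is_derive h z (h1 z)) ->
  is_derive (fun y => Vf K al be h s y) y (K * exp (al * s) * h1 (y - be * s)).
Proof.
  intros Hh. unfold Vf. eapply isd_eq. apply isd_mult.
  - auto_derive. auto. reflexivity.
  - apply (isd_comp h (fun y => y - be * s)). apply Hh. auto_derive. auto. reflexivity.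
  - simpl. ring.
Qed.

Lemma cont_comb (h h1 : R -> R) a b z : continuous h z -> continuous h1 z ->
  continuous (fun z => a * h z - b * h1 z) z.
Proof.
  intros H0 H1.
  apply (continuous_plus (fun z => a * h z) (fun z => - (b * h1 z))).
  - apply (continuous_comp h (fun v => a * v)). exact H0. apply cont_der. auto_derive. auto.
  - apply (continuous_comp h1 (fun v => - (b * v))). exact H1. apply cont_der. auto_derive. auto.
Qed.

Lemma abs_tri3 a b c e1 e2 : Rabs (a - b) < e1 -> Rabs (b - c) < e2 -> Rabs (a - c) < e1 + e2.
Proof.
  intros H1 H2. replace (a - c) with ((a - b) + (b - c)) by ring.
  eapply Rle_lt_trans. apply Rabs_triang. lra.
Qed.

Lemma smooth_piece (u : R->R->R) (K al be : R) (h h1 h2 : R -> R) (t x eps : R) :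
 (forall z, is_derive h z (h1 z)) -> (forall z, is_derive h1 z (h2 z)) ->
 (forall z, continuous h2 z) -> 0 < eps ->
 (forall s y, Rabs (s - t) < eps -> Rabs (y - x) < eps -> u s y = Vf K al be h s y) ->
 C12_at u t x /\
 dt u t x = K*exp(al*t)*(al*h(x-be*t) - be*h1(x-be*t)) /\
 dxx u t x = K*exp(al*t)*h2(x-be*t) /\ u t x = Vf K al be h t x.
Proof.
  intros Hh Hh1 Hc2 He Hu.
  assert (Hc1: forall z, continuous h1 z) by (intro; apply cont_der; eexists; apply Hh1).
  assert (Hc0: forall z, continuous h z) by (intro; apply cont_der; eexists; apply Hh).
  assert (HA: forall s y, Rabs(s-t) < eps/2 -> Rabs(y-x)<eps/2 ->
     is_derive (fun s' => u s' y) s (K * exp (al * s) * (al * h (y - be * s) - be * h1 (y - be * s)))).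
  { intros s y Hs Hy. apply is_derive_ext_loc with (fun s' => Vf K al be h s' y).
    apply loc_R with (eps/2). lra. intros s' Hs'. symmetry. apply Hu.
    pose proof (abs_tri3 _ _ _ _ _ Hs' Hs). lra. lra.
    apply Vf_dt; auto. }
  assert (HB: forall s y, Rabs(s-t) < eps/2 -> Rabs(y-x)<eps/2 ->
     is_derive (fun y' => u s y') y (K * exp (al * s) * h1 (y - be * s))).
  { intros s y Hs Hy. apply is_derive_ext_loc with (fun y' => Vf K al be h s y').
    apply loc_R with (eps/2). lra. intros y' Hy'. symmetry. apply Hu. lra.
    pose proof (abs_tri3 _ _ _ _ _ Hy' Hy). lra.
    apply Vf_dx; auto. }
  assert (HC: forall s y, Rabs(s-t) < eps/4 -> Rabs(y-x)<eps/4 ->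
     is_derive (fun z => dx u s z) y (K * exp (al * s) * h2 (y - be * s))).
  { intros s y Hs Hy. apply is_derive_ext_loc with (fun z => Vf K al be h1 s z).
    apply loc_R with (eps/4). lra. intros z Hz. unfold dx. symmetry.
    apply is_derive_unique. apply HB. lra.
    pose proof (abs_tri3 _ _ _ _ _ Hz Hy). lra.
    apply Vf_dx; auto. }
  assert (Ht0 : Rabs (t - t) < eps/4) by (rewrite Rminus_eq_0, Rabs_R0; lra).
  assert (Hx0 : Rabs (x - x) < eps/4) by (rewrite Rminus_eq_0, Rabs_R0; lra).
  split; [|split; [|split]].
  - split; [|split; [|split; [|split; [|split]]]].
    + eexists. apply HA; lra.
    + apply loc_R with (eps/2). lra. intros y Hy. eexists. apply HB; lra.
    + eexists. apply HC; lra.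
    + apply continuous_ext_loc with
        (fun p : R*R => K * exp (al * fst p) * (fun z => al * h z - be * h1 z) (snd p - be * fst p)).
      apply loc_R2 with (eps/2). lra. intros s y Hs Hy. unfold uncurry, dt; simpl.
      symmetry. apply is_derive_unique. apply HA; lra.
      exact (cont_Vf K al be (fun z => al * h z - be * h1 z) (fun z => cont_comb h h1 al be z (Hc0 z) (Hc1 z)) (t,x)).
    + apply continuous_ext_loc with
        (fun p : R*R => K * exp (al * fst p) * h1 (snd p - be * fst p)).
      apply loc_R2 with (eps/2). lra. intros s y Hs Hy. unfold uncurry, dx; simpl.
      symmetry. apply is_derive_unique. apply HB; lra.
      apply cont_Vf. auto.
    + apply continuous_ext_loc with
        (fun p : R*R => K * exp (al * fst p) * h2 (snd p - be * fst p)).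
      apply loc_R2 with (eps/4). lra. intros s y Hs Hy. unfold uncurry, dxx; simpl.
      symmetry. apply is_derive_unique. apply HC; lra.
      apply cont_Vf. auto.
  - unfold dt. apply is_derive_unique. apply HA; lra.
  - unfold dxx. apply is_derive_unique. apply HC; lra.
  - apply Hu; lra.
Qed.

Lemma cont_2cand (u V1 V2 : R*R -> R) p : continuous V1 p -> continuous V2 p ->
  V1 p = u p -> V2 p = u p -> locally p (fun q => u q = V1 q \/ u q = V2 q) -> continuous u p.
Proof.
  intros H1 H2 E1 E2 Hl. unfold continuous. apply filterlim_locally. intro eps.
  pose proof (proj1 (filterlim_locally (F:=locally p) V1 (V1 p)) H1 eps) as A1.
  pose proof (proj1 (filterlim_locally (F:=locally p) V2 (V2 p)) H2 eps) as A2.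
  generalize (filter_and _ _ Hl (filter_and _ _ A1 A2)).
  apply filter_imp. intros q [[e|e] [B1 B2]]; rewrite e; [rewrite <- E1|rewrite <- E2]; assumption.
Qed.

Lemma Derive_on_interval (u v v1 : R -> R) a b y : a < y < b ->
  (forall y, a<y<b -> u y = v y) -> (forall y, is_derive v y (v1 y)) -> Derive u y = v1 y.
Proof.
  intros Hy Hu Hv. apply is_derive_unique. apply is_derive_ext_loc with v.
  apply loc_R with (Rmin (y - a) (b - y)). apply Rmin_glb_lt; lra.
  intros z Hz. symmetry. apply Hu.
  pose proof (Rmin_l (y-a) (b-y)). pose proof (Rmin_r (y-a) (b-y)).
  apply Rabs_def2 in Hz. lra. apply Hv.
Qed.

Lemma lim_left (u v v1 : R -> R) a b : a < b -> (forall y, a<y<b -> u y = v y) ->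
  (forall y, is_derive v y (v1 y)) -> continuous v1 b ->
  filterlim (fun y => Derive u y) (at_left b) (locally (v1 b)).
Proof.
  intros Hab Hu Hv Hc. apply filterlim_ext_loc with v1.
  - unfold at_left, within. apply loc_R with (b - a). lra. intros y Hy Hyb.
    symmetry. apply Derive_on_interval with v a b; auto.
    apply Rabs_def2 in Hy. lra.
  - apply (filterlim_filter_le_1 (F:=locally b)). intros P HP. unfold at_left, within.
    apply filter_imp with P; auto. exact Hc.
Qed.

Lemma lim_right (u v v1 : R -> R) a b : a < b -> (forall y, a<y<b -> u y = v y) ->
  (forall y, is_derive v y (v1 y)) -> continuous v1 a ->
  filterlim (fun y => Derive u y) (at_right a) (locally (v1 a)).
Proof.
  intros Hab Hu Hv Hc. apply filterlim_ext_loc with v1.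
  - unfold at_right, within. apply loc_R with (b - a). lra. intros y Hy Hyb.
    symmetry. apply Derive_on_interval with v a b; auto.
    apply Rabs_def2 in Hy. lra.
  - apply (filterlim_filter_le_1 (F:=locally a)). intros P HP. unfold at_right, within.
    apply filter_imp with P; auto. exact Hc.
Qed.

Lemma lin_ball_lt (G : R -> R) q t x : (forall s s', G s - G s' = q * (s - s')) -> G t < x ->
  exists eps, 0 < eps /\ forall s y, Rabs (s - t) < eps -> Rabs (y - x) < eps -> G s < y.
Proof.
  intros HG Hx. exists ((x - G t) / (2 * (Rabs q + 1))). split.
  - apply Rdiv_lt_0_compat. lra. pose proof (Rabs_pos q). lra.
  - intros s y Hs Hy. pose proof (Rabs_pos q) as Hq.
    assert (E: (x - G t) / (2 * (Rabs q + 1)) * (Rabs q + 1) = (x - G t)/2) by (field; lra).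
    assert (Rabs (G s - G t) <= Rabs q * ((x - G t) / (2 * (Rabs q + 1)))).
    { rewrite HG, Rabs_mult. apply Rmult_le_compat_l; lra. }
    assert ((x - G t) / (2 * (Rabs q + 1)) <= (x - G t)/2).
    { rewrite <- E. pose proof (Rabs_pos q). 
      assert (0 <= (x - G t) / (2 * (Rabs q + 1))) by (apply Rlt_le, Rdiv_lt_0_compat; lra). nra. }
    apply Rabs_def2 in Hy. pose proof (Rle_abs (G s - G t)) as Z1. pose proof (Rle_abs (-(G s - G t))) as Z2. rewrite Rabs_Ropp in Z2. nra.
Qed.

Lemma lin_ball_gt (G : R -> R) q t x : (forall s s', G s - G s' = q * (s - s')) -> x < G t ->
  exists eps, 0 < eps /\ forall s y, Rabs (s - t) < eps -> Rabs (y - x) < eps -> y < G s.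
Proof.
  intros HG Hx. destruct (lin_ball_lt (fun s => - G s) (-q) t (-x)) as [e [He H]].
  intros s s'. replace (- G s - - G s') with (-(G s - G s')) by ring. rewrite (HG s s'); ring. lra.
  exists e. split; auto. intros s y Hs Hy. enough (- G s < - y) by lra. apply H; auto.
  replace (-y - -x) with (-(y-x)) by ring. rewrite Rabs_Ropp; auto.
Qed.

Lemma ball_and (P Q : R -> R -> Prop) t x :
  (exists e, 0<e /\ forall s y, Rabs (s-t)<e -> Rabs (y-x)<e -> P s y) ->
  (exists e, 0<e /\ forall s y, Rabs (s-t)<e -> Rabs (y-x)<e -> Q s y) ->
  exists e, 0<e /\ forall s y, Rabs (s-t)<e -> Rabs (y-x)<e -> P s y /\ Q s y.
Proof.
  intros [e1 [H1 P1]] [e2 [H2 P2]]. exists (Rmin e1 e2). split.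
  apply Rmin_glb_lt; auto.
  intros s y Hs Hy. pose proof (Rmin_l e1 e2). pose proof (Rmin_r e1 e2).
  split; [apply P1|apply P2]; lra.
Qed.

Lemma cont_from_ball (u : R -> R -> R) K al be (h : R -> R) t x eps :
  (forall z, continuous h z) -> 0 < eps ->
  (forall s y, Rabs (s - t) < eps -> Rabs (y - x) < eps -> u s y = Vf K al be h s y) ->
  continuous (uncurry u) (t, x).
Proof.
  intros Hc He Hu.
  apply continuous_ext_loc with (fun p : R*R => K * exp (al * fst p) * h (snd p - be * fst p)).
  apply loc_R2 with eps. auto. intros s y Hs Hy. unfold uncurry; simpl. symmetry. apply Hu; auto.
  apply cont_Vf. auto.
Qed.

Definition wf (cA L : R) (P : R -> R) z := exp (- cA * z / 2) * P (z / L).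
Definition wf1 (cA L : R) (P P1 : R -> R) z :=
  exp (- cA * z / 2) * (- cA / 2 * P (z / L) + P1 (z / L) / L).
Definition wf2 (cA L : R) (P P1 P2 : R -> R) z :=
  exp (- cA * z / 2) * ((cA^2/4) * P (z / L) + (- cA / L) * P1 (z / L) + (/ (L*L)) * P2 (z / L)).

Lemma wf_d (cA L : R) (P P1 : R -> R) z : L <> 0 -> (forall y, is_derive P y (P1 y)) ->
  is_derive (wf cA L P) z (wf1 cA L P P1 z).
Proof.
  intros HL HP. unfold wf, wf1.
  eapply isd_eq. apply isd_mult.
  - auto_derive. auto. reflexivity.
  - apply (isd_comp P (fun z => z / L)). apply HP. auto_derive. auto. reflexivity.
  - simpl. unfold Rdiv. field. auto.
Qed.

Lemma isd_lin (f g : R -> R) x a b p q : is_derive f x a -> is_derive g x b ->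
  is_derive (fun z => p * f z + q * g z) x (p * a + q * b).
Proof.
  intros H1 H2. eapply isd_eq. apply (is_derive_plus (fun z => p * f z) (fun z => q * g z)).
  eapply isd_eq. apply (isd_mult (fun _ => p) f). auto_derive; auto. exact H1. reflexivity.
  eapply isd_eq. apply (isd_mult (fun _ => q) g). auto_derive; auto. exact H2. reflexivity.
  simpl. unfold plus; simpl. ring.
Qed.

Lemma wf1_d (cA L : R) (P P1 P2 : R -> R) z : L <> 0 -> (forall y, is_derive P y (P1 y)) ->
  (forall y, is_derive P1 y (P2 y)) ->
  is_derive (wf1 cA L P P1) z (wf2 cA L P P1 P2 z).
Proof.
  intros HL HP HP1.
  apply is_derive_ext with (fun z => (- cA / 2) * wf cA L P z + (/ L) * wf cA L P1 z).
  intro t. unfold wf, wf1. simpl. field. auto.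
  eapply isd_eq. apply isd_lin; apply wf_d; auto.
  unfold wf1, wf2. simpl. field. auto.
Qed.

Lemma cont_mulc (g : R->R) a z : continuous g z -> continuous (fun z => a * g z) z.
Proof. intro H. apply (continuous_comp g (fun v => a * v)). exact H. apply cont_der. auto_derive. auto. Qed.

Lemma cont_add (g1 g2 : R->R) z : continuous g1 z -> continuous g2 z -> continuous (fun z => g1 z + g2 z) z.
Proof. intros H1 H2. apply (continuous_plus g1 g2); auto. Qed.

Lemma cont_mul (g1 g2 : R->R) z : continuous g1 z -> continuous g2 z -> continuous (fun z => g1 z * g2 z) z.
Proof. intros H1 H2. apply (continuous_mult g1 g2); auto. Qed.

Lemma cont_compL (P : R -> R) L z : continuous P (z / L) -> continuous (fun z => P (z / L)) z.
Proof. intro H. apply (continuous_comp (fun z => z / L) P). apply cont_der. auto_derive. auto. exact H. Qed.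

Lemma cont_wf2 (cA L : R) (P P1 P2 : R -> R) z : (forall y, continuous P y) ->
  (forall y, continuous P1 y) -> (forall y, continuous P2 y) -> continuous (wf2 cA L P P1 P2) z.
Proof.
  intros H0 H1 H2. unfold wf2. apply cont_mul.
  apply cont_der. auto_derive. auto.
  apply cont_add; [apply cont_add|]; apply cont_mulc; apply cont_compL; auto.
Qed.


Lemma generic (r1 r2 r3 L l cA c lm C s0 : R) (T : Rbar) (A : R -> R) (f : R -> R -> R -> R)
  (phi PM PM1 PM2 PR PR1 PR2 : R -> R) :
  0 < L -> 1 <= C ->
  (forall t, 0 <= t -> Rbar_lt (Finite t) T -> A t = cA * t) ->
  (forall t x u, 0 <= u -> rfun r1 r2 r3 L A t x * u >= f t x u) ->
  (forall t x u, 1 < u -> f t x u < 0) ->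
  0 < lm -> lm * c - lm * lm = r1 -> c <= cA ->
  0 <= cA^2/4 + l - lm * (cA - c) -> lm <= cA/2 - s0 ->
  PM 0 = 1 -> PM1 0 <= L * s0 -> PM 1 = PR 1 -> PR1 1 <= PM1 1 ->
  (forall y, 0 <= y <= 1 -> 0 <= PM y) -> (forall y, 1 <= y -> 0 <= PR y) ->
  (forall y, is_derive PM y (PM1 y)) -> (forall y, is_derive PM1 y (PM2 y)) ->
  (forall y, is_derive PR y (PR1 y)) -> (forall y, is_derive PR1 y (PR2 y)) ->
  (forall y, PM2 y = - L^2 * (r2 + l) * PM y) -> (forall y, PR2 y = - L^2 * (r3 + l) * PR y) ->
  (forall y, 0 <= y < 1 -> phi y = PM y) -> (forall y, 1 <= y -> phi y = PR y) ->
  gen_supersol f T (fun t x => C * (if Rle_dec x (c * t - ln 2 / lm) then 2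
     else if Rlt_dec x (cA * t) then exp (- lm * (x - c * t))
     else exp (- lm * (cA - c) * t) * exp (- cA * (x - cA * t) / 2) * phi ((x - cA * t) / L))).
Proof.
  intros HL HC HAT HfK Hfneg Hlm Hlmc Hcc HF3 HF4 HPM0 HPM10 HP1 HPR11 HPMp HPRp
    dPM dPM1 dPR dPR1 EPM2 EPR2 Hphi1 Hphi2.
  set (u := fun t x => C * _).
  set (g0 := fun s => c * s - ln 2 / lm).
  set (al := - lm * (cA - c)).
  set (h0 := fun _ : R => 2). set (z0 := fun _ : R => 0).
  set (h1 := fun z => exp (- lm * z)). set (h1' := fun z => - lm * exp (- lm * z)).
  set (h1'' := fun z => lm * lm * exp (- lm * z)).
  set (wM := wf cA L PM). set (wM1 := wf1 cA L PM PM1). set (wM2 := wf2 cA L PM PM1 PM2).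
  set (wR := wf cA L PR). set (wR1 := wf1 cA L PR PR1). set (wR2 := wf2 cA L PR PR1 PR2).
  assert (HL0 : L <> 0) by lra.
  assert (Hln2 : 0 < ln 2) by (rewrite <- ln_1; apply ln_increasing; lra).
  assert (U0 : forall s y, y <= g0 s -> u s y = Vf C 0 0 h0 s y).
  { intros s y H. unfold u, Vf, h0, g0 in *. destruct (Rle_dec y (c * s - ln 2 / lm)); [|contradiction].
    rewrite Rmult_0_l, exp_0. ring. }
  assert (U1 : forall s y, g0 s < y < cA * s -> u s y = Vf C (lm * c) 0 h1 s y).
  { intros s y [H H']. unfold u, Vf, h1, g0 in *.
    destruct (Rle_dec y (c * s - ln 2 / lm)); [lra|].
    destruct (Rlt_dec y (cA * s)); [|lra].
    rewrite Rmult_assoc, <- exp_plus. f_equal. f_equal. ring. }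
  assert (U2 : forall s y, g0 s < y -> cA * s <= y < cA * s + L -> u s y = Vf C al cA wM s y).
  { intros s y H [H1 H2]. unfold u, Vf, wM, wf, g0, al in *.
    destruct (Rle_dec y (c * s - ln 2 / lm)); [lra|].
    destruct (Rlt_dec y (cA * s)); [lra|].
    rewrite Hphi1. ring. split.
    apply Rmult_le_pos; [lra| left; apply Rinv_0_lt_compat; lra].
    apply Rmult_lt_reg_r with L; auto. unfold Rdiv. rewrite Rmult_assoc, Rinv_l; lra. }
  assert (U3 : forall s y, g0 s < y -> cA * s + L <= y -> u s y = Vf C al cA wR s y).
  { intros s y H H1. unfold u, Vf, wR, wf, g0, al in *.
    destruct (Rle_dec y (c * s - ln 2 / lm)); [lra|].
    destruct (Rlt_dec y (cA * s)); [lra|].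
    rewrite Hphi2. ring.
    apply Rmult_le_reg_r with L; auto. unfold Rdiv. rewrite Rmult_assoc, Rinv_l; lra. }
  assert (dh0 : forall z, is_derive h0 z (z0 z)) by (intro; unfold h0, z0; auto_derive; auto).
  assert (dz0 : forall z, is_derive z0 z (z0 z)) by (intro; unfold z0; auto_derive; auto).
  assert (cz0 : forall z, continuous z0 z) by (intro; apply continuous_const).
  assert (dh1 : forall z, is_derive h1 z (h1' z)) by (intro; unfold h1, h1'; auto_derive; auto; ring).
  assert (dh1' : forall z, is_derive h1' z (h1'' z)) by (intro; unfold h1', h1''; auto_derive; auto; ring).
  assert (ch1'' : forall z, continuous h1'' z) by (intro; apply cont_der; unfold h1''; auto_derive; auto).
  assert (cPM : forall y, continuous PM y) by (intro; apply cont_der; eexists; apply dPM).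
  assert (cPM1 : forall y, continuous PM1 y) by (intro; apply cont_der; eexists; apply dPM1).
  assert (cPM2 : forall y, continuous PM2 y).
  { intro y. apply continuous_ext with (fun y => (- L^2 * (r2 + l)) * PM y).
    intro; rewrite EPM2; auto. apply cont_mulc; auto. }
  assert (cPR : forall y, continuous PR y) by (intro; apply cont_der; eexists; apply dPR).
  assert (cPR1 : forall y, continuous PR1 y) by (intro; apply cont_der; eexists; apply dPR1).
  assert (cPR2 : forall y, continuous PR2 y).
  { intro y. apply continuous_ext with (fun y => (- L^2 * (r3 + l)) * PR y).
    intro; rewrite EPR2; auto. apply cont_mulc; auto. }
  assert (dwM : forall z, is_derive wM z (wM1 z)) by (intro; apply wf_d; auto).
  assert (dwM1 : forall z, is_derive wM1 z (wM2 z)) by (intro; apply wf1_d; auto).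
  assert (cwM2 : forall z, continuous wM2 z) by (intro; apply cont_wf2; auto).
  assert (dwR : forall z, is_derive wR z (wR1 z)) by (intro; apply wf_d; auto).
  assert (dwR1 : forall z, is_derive wR1 z (wR2 z)) by (intro; apply wf1_d; auto).
  assert (cwR2 : forall z, continuous wR2 z) by (intro; apply cont_wf2; auto).
  assert (Lg0 : forall s s', g0 s - g0 s' = c * (s - s')) by (intros; unfold g0; ring).
  assert (LcA : forall s s', (fun s => cA * s) s - (fun s => cA * s) s' = cA * (s - s')) by (intros; ring).
  assert (LcAL : forall s s', (fun s => cA * s + L) s - (fun s => cA * s + L) s' = cA * (s - s')) by (intros; ring).
  assert (Hg0cA : forall t, 0 <= t -> g0 t < cA * t).
  { intros t Ht. unfold g0. assert (0 < ln 2 / lm) by (apply Rdiv_lt_0_compat; auto). nra. }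
  split.
  { intros t x [Ht0 HtT].
    pose proof (Hg0cA t Ht0) as Hgt.
    assert (ch0 : forall z, continuous h0 z) by (intro; apply continuous_const).
    assert (ch1 : forall z, continuous h1 z) by (intro; apply cont_der; eexists; apply dh1).
    assert (cwM : forall z, continuous wM z) by (intro; apply cont_der; eexists; apply dwM).
    assert (cwR : forall z, continuous wR z) by (intro; apply cont_der; eexists; apply dwR).
    destruct (total_order_T x (g0 t)) as [[Hx|Hx]|Hx].
    - destruct (lin_ball_gt g0 c t x Lg0 Hx) as [e [He Hb]].
      apply (cont_from_ball u C 0 0 h0 t x e ch0 He).
      intros s y Hs Hy. apply U0. left. apply Hb; auto.
    - destruct (lin_ball_gt (fun s => cA * s) cA t x LcA ltac:(lra)) as [e [He Hb]].
      apply (cont_2cand (uncurry u) (fun p => Vf C 0 0 h0 (fst p) (snd p))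
                (fun p => Vf C (lm * c) 0 h1 (fst p) (snd p))).
      + exact (cont_Vf C 0 0 h0 ch0 (t, x)).
      + exact (cont_Vf C (lm * c) 0 h1 ch1 (t, x)).
      + simpl. unfold uncurry; simpl. symmetry. apply U0. lra.
      + simpl. unfold uncurry; simpl. rewrite U0 by lra. unfold Vf, h0, h1.
        rewrite Rmult_assoc, <- exp_plus. rewrite Hx. unfold g0.
        replace (lm * c * t + - lm * (c * t - ln 2 / lm - 0 * t)) with (ln 2) by (field; lra).
        rewrite exp_ln by lra. rewrite Rmult_0_l, exp_0. ring.
      + apply loc_R2 with e. auto. intros s y Hs Hy. unfold uncurry; simpl.
        destruct (Rle_dec y (g0 s)). left; apply U0; auto.
        right; apply U1. split. lra. apply Hb; auto.
    - destruct (total_order_T x (cA * t)) as [[Hx2|Hx2]|Hx2].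
      + destruct (ball_and _ _ t x (lin_ball_lt g0 c t x Lg0 Hx)
                  (lin_ball_gt (fun s => cA * s) cA t x LcA Hx2)) as [e [He Hb]].
        apply (cont_from_ball u C (lm * c) 0 h1 t x e ch1 He).
        intros s y Hs Hy. apply U1. apply Hb; auto.
      + destruct (ball_and _ _ t x (lin_ball_lt g0 c t x Lg0 Hx)
                  (lin_ball_gt (fun s => cA * s + L) cA t x LcAL ltac:(lra))) as [e [He Hb]].
        apply (cont_2cand (uncurry u) (fun p => Vf C (lm * c) 0 h1 (fst p) (snd p))
                (fun p => Vf C al cA wM (fst p) (snd p))).
        * exact (cont_Vf C (lm * c) 0 h1 ch1 (t, x)).
        * exact (cont_Vf C al cA wM cwM (t, x)).
        * simpl. unfold uncurry; simpl. rewrite (U2 t x) by lra. unfold Vf, h1, wM, wf.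
          rewrite Hx2, Rminus_eq_0. replace (0 / L) with 0 by (unfold Rdiv; ring). rewrite HPM0.
          replace (- cA * 0 / 2) with 0 by (unfold Rdiv; ring). rewrite exp_0.
          rewrite Rmult_assoc, <- exp_plus. unfold al. rewrite !Rmult_1_r. f_equal. f_equal. ring.
        * simpl. unfold uncurry; simpl. symmetry. apply U2; lra.
        * apply loc_R2 with e. auto. intros s y Hs Hy. unfold uncurry; simpl.
          destruct (Hb s y Hs Hy) as [B1 B2].
          destruct (Rlt_dec y (cA * s)). left; apply U1; auto.
          right; apply U2; lra.
      + destruct (total_order_T x (cA * t + L)) as [[Hx3|Hx3]|Hx3].
        * destruct (ball_and _ _ t x (lin_ball_lt g0 c t x Lg0 Hx)
                 (ball_and _ _ t x (lin_ball_lt (fun s => cA * s) cA t x LcA Hx2)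
                  (lin_ball_gt (fun s => cA * s + L) cA t x LcAL Hx3))) as [e [He Hb]].
          apply (cont_from_ball u C al cA wM t x e cwM He).
          intros s y Hs Hy. destruct (Hb s y Hs Hy) as [B1 [B2 B3]]. apply U2; auto. lra.
        * destruct (ball_and _ _ t x (lin_ball_lt g0 c t x Lg0 Hx)
                  (lin_ball_lt (fun s => cA * s) cA t x LcA Hx2)) as [e [He Hb]].
          apply (cont_2cand (uncurry u) (fun p => Vf C al cA wM (fst p) (snd p))
                (fun p => Vf C al cA wR (fst p) (snd p))).
          -- exact (cont_Vf C al cA wM cwM (t, x)).
          -- exact (cont_Vf C al cA wR cwR (t, x)).
          -- simpl. unfold uncurry; simpl. rewrite (U3 t x) by lra. unfold Vf, wM, wR, wf.
             rewrite Hx3. replace (cA * t + L - cA * t) with L by ring.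
             replace (L / L) with 1 by (field; auto). rewrite HP1. reflexivity.
          -- simpl. unfold uncurry; simpl. symmetry. apply U3; lra.
          -- apply loc_R2 with e. auto. intros s y Hs Hy. unfold uncurry; simpl.
             destruct (Hb s y Hs Hy) as [B1 B2].
             destruct (Rlt_dec y (cA * s + L)). left; apply U2; lra.
             right; apply U3; lra.
        * destruct (ball_and _ _ t x (lin_ball_lt g0 c t x Lg0 Hx)
                  (lin_ball_lt (fun s => cA * s + L) cA t x LcAL Hx3)) as [e [He Hb]].
          apply (cont_from_ball u C al cA wR t x e cwR He).
          intros s y Hs Hy. destruct (Hb s y Hs Hy) as [B1 B2]. apply U3; auto. lra. }
  exists 3%nat, (fun i s => match i with 0%nat => g0 s | 1%nat => cA * s | _ => cA * s + L end).
  split; [|split; [|split]].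
  - intros i s Hi. destruct i as [|[|i]]; simpl; split.
    + unfold g0; auto_derive; auto.
    + apply continuous_ext with (fun _ => c). intro; symmetry; apply is_derive_unique.
      unfold g0; auto_derive; auto; ring. apply continuous_const.
    + auto_derive; auto.
    + apply continuous_ext with (fun _ => cA). intro; symmetry; apply is_derive_unique.
      auto_derive; auto; ring. apply continuous_const.
    + auto_derive; auto.
    + apply continuous_ext with (fun _ => cA). intro; symmetry; apply is_derive_unique.
      auto_derive; auto; ring. apply continuous_const.
  - intros i t Hi [Ht0 HtT]. destruct i as [|[|i]]; simpl.
    + apply Hg0cA; auto.
    + lra.
    + exfalso. lia.
  - intros i t x Hi [Ht0 HtT] [Hl Hr].
    assert (HA : A t = cA * t) by (apply HAT; auto).
    pose proof (Hg0cA t Ht0) as Hgt.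
    destruct i as [|[|[|[|i]]]]; simpl in Hl, Hr.
    +
      destruct Hr as [Hr|Hr]; [discriminate|].
      destruct (lin_ball_gt g0 c t x Lg0 Hr) as [e [He Hb]].
      destruct (smooth_piece u C 0 0 h0 z0 z0 t x e dh0 dz0 cz0 He) as [HC12 [Hdt [Hdxx Hux]]].
      { intros s y Hs Hy. apply U0. left. apply Hb; auto. }
      split; auto. rewrite Hdt, Hdxx, Hux. unfold Vf, h0, z0. rewrite Rmult_0_l, exp_0.
      assert (f t x (C * 1 * 2) < 0) by (apply Hfneg; lra). lra.
    +
      destruct Hl as [Hl|Hl]; [discriminate|]. destruct Hr as [Hr|Hr]; [discriminate|].
      destruct (ball_and _ _ t x (lin_ball_lt g0 c t x Lg0 Hl)
                  (lin_ball_gt (fun s => cA * s) cA t x LcA Hr)) as [e [He Hb]].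
      destruct (smooth_piece u C (lm * c) 0 h1 h1' h1'' t x e dh1 dh1' ch1'' He) as [HC12 [Hdt [Hdxx Hux]]].
      { intros s y Hs Hy. apply U1. apply Hb; auto. }
      split; auto. rewrite Hdt, Hdxx, Hux. unfold Vf, h1, h1', h1''.
      set (E := exp (lm * c * t)). set (F := exp (- lm * (x - 0 * t))).
      assert (0 < E) by apply exp_pos. assert (0 < F) by apply exp_pos.
      pose proof (HfK t x (C * E * F)) as HK.
      unfold rfun in HK. rewrite HA in HK. destruct (Rlt_dec x (cA * t)); [|lra].
      assert (0 <= C * E * F) by (apply Rmult_le_pos; [apply Rmult_le_pos|]; lra).
      specialize (HK H1).
      assert (C * E * (lm * c * F - 0 * (- lm * F)) - C * E * (lm * lm * F) = r1 * (C * E * F))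
        by (rewrite <- Hlmc; ring).
      lra.
    +
      destruct Hl as [Hl|Hl]; [discriminate|]. destruct Hr as [Hr|Hr]; [discriminate|].
      destruct (ball_and _ _ t x (lin_ball_lt g0 c t x Lg0 ltac:(lra))
                 (ball_and _ _ t x (lin_ball_lt (fun s => cA * s) cA t x LcA Hl)
                  (lin_ball_gt (fun s => cA * s + L) cA t x LcAL Hr))) as [e [He Hb]].
      destruct (smooth_piece u C al cA wM wM1 wM2 t x e dwM dwM1 cwM2 He) as [HC12 [Hdt [Hdxx Hux]]].
      { intros s y Hs Hy. destruct (Hb s y Hs Hy) as [B1 [B2 B3]]. apply U2; auto. lra. }
      split; auto. rewrite Hdt, Hdxx, Hux. unfold Vf, wM, wM1, wM2, wf, wf1, wf2.
      rewrite EPM2.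
      set (E := exp (al * t)). set (F := exp (- cA * (x - cA * t) / 2)).
      set (P := PM ((x - cA * t) / L)). set (P1 := PM1 ((x - cA * t) / L)).
      assert (0 < E) by apply exp_pos. assert (0 < F) by apply exp_pos.
      assert (0 <= P).
      { apply HPMp. split.
        apply Rmult_le_pos; [lra| left; apply Rinv_0_lt_compat; lra].
        apply Rmult_le_reg_r with L; auto. unfold Rdiv. rewrite Rmult_assoc, Rinv_l; lra. }
      pose proof (HfK t x (C * E * (F * P))) as HK.
      unfold rfun in HK. rewrite HA in HK. destruct (Rlt_dec x (cA * t)); [lra|].
      destruct (Rlt_dec x (cA * t + L)); [|lra].
      assert (0 <= C * E * (F * P)) by (apply Rmult_le_pos; [apply Rmult_le_pos|apply Rmult_le_pos]; lra).
      specialize (HK H2).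
      assert (C * E * (al * (F * P) - cA * (F * (- cA / 2 * P + P1 / L))) -
              C * E * (F * (cA ^ 2 / 4 * P + - cA / L * P1 + / (L * L) * (- L ^ 2 * (r2 + l) * P)))
              - r2 * (C * E * (F * P)) = (C * E * F * P) * (cA^2/4 + l - lm * (cA - c))).
      { unfold al. field. auto. }
      assert (0 <= (C * E * F * P) * (cA^2/4 + l - lm * (cA - c))).
      { apply Rmult_le_pos; auto. repeat apply Rmult_le_pos; lra. }
      lra.
    +
      destruct Hl as [Hl|Hl]; [discriminate|].
      destruct (ball_and _ _ t x (lin_ball_lt g0 c t x Lg0 ltac:(lra))
                  (lin_ball_lt (fun s => cA * s + L) cA t x LcAL Hl)) as [e [He Hb]].
      destruct (smooth_piece u C al cA wR wR1 wR2 t x e dwR dwR1 cwR2 He) as [HC12 [Hdt [Hdxx Hux]]].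
      { intros s y Hs Hy. destruct (Hb s y Hs Hy) as [B1 B2]. apply U3; auto. lra. }
      split; auto. rewrite Hdt, Hdxx, Hux. unfold Vf, wR, wR1, wR2, wf, wf1, wf2.
      rewrite EPR2.
      set (E := exp (al * t)). set (F := exp (- cA * (x - cA * t) / 2)).
      set (P := PR ((x - cA * t) / L)). set (P1 := PR1 ((x - cA * t) / L)).
      assert (0 < E) by apply exp_pos. assert (0 < F) by apply exp_pos.
      assert (0 <= P).
      { apply HPRp.
        apply Rmult_le_reg_r with L; auto. unfold Rdiv. rewrite Rmult_assoc, Rinv_l; lra. }
      pose proof (HfK t x (C * E * (F * P))) as HK.
      unfold rfun in HK. rewrite HA in HK. destruct (Rlt_dec x (cA * t)); [lra|].
      destruct (Rlt_dec x (cA * t + L)); [lra|].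
      assert (0 <= C * E * (F * P)) by (apply Rmult_le_pos; [apply Rmult_le_pos|apply Rmult_le_pos]; lra).
      specialize (HK H2).
      assert (C * E * (al * (F * P) - cA * (F * (- cA / 2 * P + P1 / L))) -
              C * E * (F * (cA ^ 2 / 4 * P + - cA / L * P1 + / (L * L) * (- L ^ 2 * (r3 + l) * P)))
              - r3 * (C * E * (F * P)) = (C * E * F * P) * (cA^2/4 + l - lm * (cA - c))).
      { unfold al. field. auto. }
      assert (0 <= (C * E * F * P) * (cA^2/4 + l - lm * (cA - c))).
      { apply Rmult_le_pos; auto. repeat apply Rmult_le_pos; lra. }
      lra.
    + exfalso; lia.
  - intros i t Hi [Ht0 HtT].
    pose proof (Hg0cA t Ht0) as Hgt.
    unfold dx. destruct i as [|[|[|i]]]; simpl.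
    + exists (C * exp (0 * t) * z0 (g0 t - 0 * t)), (C * exp (lm * c * t) * h1' (g0 t - 0 * t)).
      split; [|split].
      * apply (lim_left _ (fun y => Vf C 0 0 h0 t y) (fun y => C * exp (0 * t) * z0 (y - 0 * t)) (g0 t - 1) (g0 t)). lra.
        intros y [_ Hy]; apply U0; lra. intro y; apply Vf_dx; exact dh0.
        apply cont_der; eexists; apply (Vf_dx C 0 0 z0 z0 t (g0 t) dz0).
      * apply (lim_right _ (fun y => Vf C (lm * c) 0 h1 t y) (fun y => C * exp (lm * c * t) * h1' (y - 0 * t)) (g0 t) (cA * t)). lra.
        intros y Hy; apply U1; lra. intro y; apply Vf_dx; exact dh1.
        apply cont_der; eexists; apply (Vf_dx C (lm * c) 0 h1' h1'' t (g0 t) dh1').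
      * unfold z0, h1'. assert (0 < exp (lm * c * t)) by apply exp_pos.
        assert (0 < exp (- lm * (g0 t - 0 * t))) by apply exp_pos.
        assert (0 <= C * exp (lm * c * t) * (lm * exp (- lm * (g0 t - 0 * t)))).
        { repeat apply Rmult_le_pos; lra. }
        lra.
    + exists (C * exp (lm * c * t) * h1' (cA * t - 0 * t)), (C * exp (al * t) * wM1 (cA * t - cA * t)).
      split; [|split].
      * apply (lim_left _ (fun y => Vf C (lm * c) 0 h1 t y) (fun y => C * exp (lm * c * t) * h1' (y - 0 * t)) (g0 t) (cA * t)). lra.
        intros y Hy; apply U1; lra. intro y; apply Vf_dx; exact dh1.
        apply cont_der; eexists; apply (Vf_dx C (lm * c) 0 h1' h1'' t (cA * t) dh1').
      * apply (lim_right _ (fun y => Vf C al cA wM t y) (fun y => C * exp (al * t) * wM1 (y - cA * t)) (cA * t) (cA * t + L)). lra.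
        intros y Hy; apply U2; lra. intro y; apply Vf_dx; exact dwM.
        apply cont_der; eexists; apply (Vf_dx C al cA wM1 wM2 t (cA * t) dwM1).
      * unfold h1', wM1, wf1. rewrite Rminus_eq_0.
        replace (0 / L) with 0 by (unfold Rdiv; ring). rewrite HPM0.
        replace (- cA * 0 / 2) with 0 by (unfold Rdiv; ring). rewrite exp_0.
        replace (C * exp (lm * c * t) * (- lm * exp (- lm * (cA * t - 0 * t))))
          with (C * exp (al * t) * (- lm)).
        2:{ unfold al. replace (C * exp (lm * c * t) * (- lm * exp (- lm * (cA * t - 0 * t))))
              with (C * (exp (lm * c * t) * exp (- lm * (cA * t - 0 * t))) * (- lm)) by ring.
            rewrite <- exp_plus. f_equal. f_equal. f_equal. ring. }
        assert (0 < exp (al * t)) by apply exp_pos.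
        assert (PM1 0 / L <= s0).
        { apply Rmult_le_reg_r with L; auto. unfold Rdiv. rewrite Rmult_assoc, Rinv_l; lra. }
        apply Rmult_le_compat_l. apply Rmult_le_pos; lra. lra.
    + exists (C * exp (al * t) * wM1 (cA * t + L - cA * t)), (C * exp (al * t) * wR1 (cA * t + L - cA * t)).
      split; [|split].
      * apply (lim_left _ (fun y => Vf C al cA wM t y) (fun y => C * exp (al * t) * wM1 (y - cA * t)) (cA * t) (cA * t + L)). lra.
        intros y Hy; apply U2; lra. intro y; apply Vf_dx; exact dwM.
        apply cont_der; eexists; apply (Vf_dx C al cA wM1 wM2 t (cA * t + L) dwM1).
      * apply (lim_right _ (fun y => Vf C al cA wR t y) (fun y => C * exp (al * t) * wR1 (y - cA * t)) (cA * t + L) (cA * t + L + 1)). lra.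
        intros y Hy; apply U3; lra. intro y; apply Vf_dx; exact dwR.
        apply cont_der; eexists; apply (Vf_dx C al cA wR1 wR2 t (cA * t + L) dwR1).
      * unfold wM1, wR1, wf1. replace (cA * t + L - cA * t) with L by ring.
        replace (L / L) with 1 by (field; auto). rewrite HP1.
        assert (0 < exp (al * t)) by apply exp_pos. assert (0 < exp (- cA * L / 2)) by apply exp_pos.
        apply Rmult_le_compat_l. apply Rmult_le_pos; lra.
        apply Rmult_le_compat_l. lra.
        assert (PR1 1 / L <= PM1 1 / L).
        { unfold Rdiv. apply Rmult_le_compat_r; auto. left; apply Rinv_0_lt_compat; lra. }
        lra.
    + exfalso; lia.
Qed.


Lemma cfacts r1 l cA : 0 < r1 -> 0 <= - l - r1 -> 2 * sqrt (- l) < cA ->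
  let c := cspeed r1 l cA in let lm := lam r1 c in
  0 < lm /\ lm * c - lm * lm = r1 /\ c <= cA /\ 0 <= cA^2/4 + l - lm * (cA - c) /\
  lm <= cA/2 - sqrt (- l - r1).
Proof.
  intros Hr1 Hl HcA c lm.
  set (s := sqrt (- l - r1)). set (q := sqrt (- l)). set (rho := sqrt r1).
  assert (Hs : 0 <= s) by apply sqrt_pos.
  assert (Hs2 : s * s = - l - r1) by (apply sqrt_sqrt; lra).
  assert (Hq : 0 <= q) by apply sqrt_pos.
  assert (Hq2 : q * q = - l) by (apply sqrt_sqrt; lra).
  assert (Hrho : 0 < rho) by (apply sqrt_lt_R0; lra).
  assert (Hrho2 : rho * rho = r1) by (apply sqrt_sqrt; lra).
  assert (Hsq : s <= q) by (unfold s, q; apply sqrt_le_1_alt; lra).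
  assert (HcA2 : 2 * q < cA) by exact HcA.
  unfold lm, c, cspeed, lam, Ffun. fold s. fold rho.
  destruct (Rlt_dec cA (2 * rho + 2 * s)) as [H|H].
  - set (d := cA - 2 * s).
    assert (Hd : 0 < d) by (unfold d; lra).
    assert (Hd2 : d < 2 * rho) by (unfold d; lra).
    assert (E : (d / 2 + 2 * r1 / d) ^ 2 - 4 * r1 = (2 * r1 / d - d / 2) ^ 2) by (field; lra).
    assert (P : 0 <= 2 * r1 / d - d / 2).
    { assert (d * d < 4 * r1) by nra.
      assert (2 * r1 / d - d / 2 = (4 * r1 - d * d) / (2 * d)) by (field; lra).
      rewrite H1. apply Rlt_le, Rdiv_lt_0_compat; lra. }
    rewrite E, sqrt_pow2 by exact P.
    replace ((d / 2 + 2 * r1 / d - (2 * r1 / d - d / 2)) / 2) with (d / 2) by (field; lra).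
    assert (Hdq : 2 * (q - s) < d) by (unfold d; lra).
    split; [lra|split; [field; lra|split; [|split]]].
    + assert (d * d + 4 * s * d - 4 * r1 >= 0).
      { assert ((d - 2 * q + 2 * s) * (d + 2 * q + 2 * s) >= 0) by nra.
        nra. }
      assert (2 * r1 / d <= d / 2 + 2 * s).
      { apply Rmult_le_reg_r with d; auto. unfold Rdiv.
        replace (2 * r1 * / d * d) with (2 * r1) by (field; lra). nra. }
      unfold d in *. lra.
    + assert (cA = d + 2 * s) by (unfold d; ring). rewrite H0.
      assert (l = - r1 - s * s) by lra. rewrite H1.
      right. field. lra.
    + unfold d. lra.
  - replace ((2 * rho) ^ 2 - 4 * r1) with 0 by nra. rewrite sqrt_0.
    replace ((2 * rho - 0) / 2) with rho by field.
    split; [lra|split; [nra|split; [lra|split]]].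
    + assert (cA / 2 - rho >= s) by lra.
      assert ((cA/2 - rho) * (cA/2 - rho) >= s * s) by nra.
      nra.
    + lra.
Qed.


Lemma arccot_facts y : 0 < y ->
  0 < arccot y < PI / 2 /\ 0 < sin (arccot y) /\ cos (arccot y) = y * sin (arccot y).
Proof.
  intros Hy. unfold arccot.
  assert (H0 : 0 < atan y) by (rewrite <- atan_0; apply atan_increasing; auto).
  pose proof (atan_bound y) as [Hb1 Hb2].
  rewrite sin_shift, cos_shift, sin_atan, cos_atan.
  assert (0 < sqrt (1 + y²)) by (apply sqrt_lt_R0; unfold Rsqr; nra).
  split; [lra|split].
  - apply Rdiv_lt_0_compat; lra.
  - field. lra.
Qed.

Lemma arccot_inv y : 0 < y -> arccot (/ y) = atan y.
Proof. intro Hy. unfold arccot. rewrite atan_inv by auto. ring. Qed.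

Lemma c23 (ra rb r2 L : R) : ra < rb -> rb < r2 -> 0 < L ->
  L <= / sqrt (r2 - rb) * arccot (sqrt ((r2 - rb) / Rabs (ra - rb))) ->
  let C3 := arccot (sqrt ((rb - ra) / (r2 - rb))) in
  0 < C3 /\ L * sqrt (r2 - rb) + C3 <= PI / 2 /\ 0 < sin C3 /\
  cos C3 = sqrt (rb - ra) / sqrt (r2 - rb) * sin C3.
Proof.
  intros H1 H2 HL HLb C3.
  assert (Hb : 0 < sqrt (r2 - rb)) by (apply sqrt_lt_R0; lra).
  assert (Hs : 0 < sqrt (rb - ra)) by (apply sqrt_lt_R0; lra).
  rewrite Rabs_left1 in HLb by lra. replace (- (ra - rb)) with (rb - ra) in HLb by ring.
  unfold C3. rewrite sqrt_div by lra. rewrite sqrt_div in HLb by lra.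
  assert (Hq : 0 < sqrt (rb - ra) / sqrt (r2 - rb)) by (apply Rdiv_lt_0_compat; auto).
  destruct (arccot_facts _ Hq) as [[Ha1 Ha2] [Hsn Hcs]].
  split; [lra|split; [|split; auto]].
  replace (sqrt (r2 - rb) / sqrt (rb - ra)) with (/ (sqrt (rb - ra) / sqrt (r2 - rb))) in HLb
    by (field; lra).
  rewrite arccot_inv in HLb by auto.
  unfold arccot. 
  apply Rmult_le_compat_l with (r := sqrt (r2 - rb)) in HLb; [|lra].
  rewrite <- Rmult_assoc, Rinv_r in HLb by lra. lra.
Qed.

Definition Pfacts (r2 r3 L l s0 : R) (phi PM PM1 PM2 PR PR1 PR2 : R -> R) : Prop :=
  PM 0 = 1 /\ PM1 0 <= L * s0 /\ PM 1 = PR 1 /\ PR1 1 <= PM1 1 /\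
  (forall y, 0 <= y <= 1 -> 0 <= PM y) /\ (forall y, 1 <= y -> 0 <= PR y) /\
  (forall y, is_derive PM y (PM1 y)) /\ (forall y, is_derive PM1 y (PM2 y)) /\
  (forall y, is_derive PR y (PR1 y)) /\ (forall y, is_derive PR1 y (PR2 y)) /\
  (forall y, PM2 y = - L^2 * (r2 + l) * PM y) /\ (forall y, PR2 y = - L^2 * (r3 + l) * PR y) /\
  (forall y, 0 <= y < 1 -> phi y = PM y) /\ (forall y, 1 <= y -> phi y = PR y).

Lemma case2 r1 r2 r3 L : 0 < r1 -> r1 < r3 -> r3 < r2 -> 0 < L -> L <= Lbar r1 r2 r3 ->
  exists PM PM1 PM2 PR PR1 PR2,
    Pfacts r2 r3 L (- r3) (sqrt (- - r3 - r1)) (phi1 r1 r2 r3 L (- r3)) PM PM1 PM2 PR PR1 PR2.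
Proof.
  intros Hr1 H13 H32 HL HLb.
  assert (HLb' := HLb).
  unfold Lbar in HLb'. destruct (Req_EM_T r1 r3); [lra|]. rewrite Rmax_right in HLb' by lra.
  destruct (c23 r1 r3 r2 L H13 H32 HL HLb') as [HC3 [Hsum [HS Hcos]]].
  set (b := sqrt (r2 - r3)) in *. set (C3 := arccot (sqrt ((r3 - r1) / (r2 - r3)))) in *.
  set (S := sin C3) in *.
  assert (Hb : 0 < b) by (apply sqrt_lt_R0; lra).
  assert (Hb2 : b * b = r2 - r3) by (apply sqrt_sqrt; lra).
  assert (Hsg : 0 < sqrt (r3 - r1)) by (apply sqrt_lt_R0; lra).
  exists (fun y => sin (L * b * y + C3) / S), (fun y => L * b * cos (L * b * y + C3) / S),
    (fun y => - (L * b)^2 * sin (L * b * y + C3) / S),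
    (fun y => sin (L * b + C3) / S + b * cos (L * b + C3) / S * (L * (y - 1))),
    (fun _ => b * cos (L * b + C3) / S * L), (fun _ => 0).
  unfold Pfacts.
  split; [|split; [|split; [|split; [|split; [|split; [|split; [|split; [|split; [|split; [|split; [|split; [|split]]]]]]]]]]]].
  - rewrite Rmult_0_r, Rplus_0_l. fold S. field. lra.
  - rewrite Rmult_0_r, Rplus_0_l. fold S. rewrite Hcos. replace (- - r3 - r1) with (r3 - r1) by ring.
    right. field. lra.
  - rewrite Rmult_1_r. ring.
  - rewrite Rmult_1_r. right. field. lra.
  - intros y Hy. apply Rmult_le_pos; [|left; apply Rinv_0_lt_compat; lra].
    apply sin_ge_0. assert (0 <= L * b * y) by (repeat apply Rmult_le_pos; lra). lra.
    assert (L * b * y <= L * b) by (assert (0 < L * b) by nra; nra). pose proof PI_RGT_0. lra.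
  - intros y Hy. assert (0 < L * b) by nra.
    assert (0 <= sin (L * b + C3)) by (apply sin_ge_0; pose proof PI_RGT_0; lra).
    assert (0 <= cos (L * b + C3)) by (apply cos_ge_0; pose proof PI_RGT_0; lra).
    apply Rplus_le_le_0_compat.
    apply Rmult_le_pos; [|left; apply Rinv_0_lt_compat; lra]; lra.
    apply Rmult_le_pos; [|nra]. apply Rmult_le_pos; [|left; apply Rinv_0_lt_compat; lra]; nra.
  - intro y. auto_derive. auto. field. lra.
  - intro y. auto_derive. auto. field. lra.
  - intro y. auto_derive. auto. field. lra.
  - intro y. auto_derive. auto. ring.
  - intro y. replace (r2 + - r3) with (b * b) by lra. field. lra.
  - intro y. ring.
  - intros y Hy. unfold phi1. destruct (Rle_dec L (Lbar r1 r2 r3)); [|lra].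
    destruct (Rlt_dec r1 r3); [|lra]. unfold phi_case2. fold b. fold C3. fold S.
    destruct (Rle_dec y 0).
    + assert (y = 0) by lra. subst y. rewrite Rmult_0_r, Rmult_0_r, exp_0, Rplus_0_l. fold S. field. lra.
    + destruct (Rlt_dec y 1); [reflexivity|lra].
  - intros y Hy. unfold phi1. destruct (Rle_dec L (Lbar r1 r2 r3)); [|lra].
    destruct (Rlt_dec r1 r3); [|lra]. unfold phi_case2. fold b. fold C3. fold S.
    destruct (Rle_dec y 0); [lra|]. destruct (Rlt_dec y 1); [lra|]. reflexivity.
Qed.

Lemma case3 r1 r2 r3 L : 0 < r3 -> r3 < r1 -> r1 < r2 -> 0 < L -> L <= Lbar r1 r2 r3 ->
  exists PM PM1 PM2 PR PR1 PR2,
    Pfacts r2 r3 L (- r1) (sqrt (- - r1 - r1)) (phi1 r1 r2 r3 L (- r1)) PM PM1 PM2 PR PR1 PR2.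
Proof.
  intros Hr3 H31 H12 HL HLb.
  assert (HLb' := HLb).
  unfold Lbar in HLb'. destruct (Req_EM_T r1 r3); [lra|]. rewrite Rmax_left in HLb' by lra.
  rewrite Rabs_minus_sym in HLb'.
  destruct (c23 r3 r1 r2 L H31 H12 HL HLb') as [HC3 [Hsum [HS Hcos]]].
  set (b := sqrt (r2 - r1)) in *. set (C3 := arccot (sqrt ((r1 - r3) / (r2 - r1)))) in *.
  set (S := sin C3) in *. set (sg := sqrt (r1 - r3)) in *.
  assert (Hb : 0 < b) by (apply sqrt_lt_R0; lra).
  assert (Hb2 : b * b = r2 - r1) by (apply sqrt_sqrt; lra).
  assert (Hsg : 0 < sg) by (apply sqrt_lt_R0; lra).
  assert (Hsg2 : sg * sg = r1 - r3) by (apply sqrt_sqrt; lra).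
  set (N := phi_case2 r3 r2 r1 L 1).
  assert (HN : N = sin (L * b + C3) / S).
  { unfold N, phi_case2. fold b C3 S. destruct (Rle_dec 1 0); [lra|].
    destruct (Rlt_dec 1 1); [lra|]. ring. }
  assert (HLb0 : 0 < L * b) by nra.
  assert (Hsin1 : 0 < sin (L * b + C3)) by (apply sin_gt_0; pose proof PI_RGT_0; lra).
  assert (Hcos1 : 0 <= cos (L * b + C3)) by (apply cos_ge_0; pose proof PI_RGT_0; lra).
  assert (HN0 : 0 < N) by (rewrite HN; apply Rdiv_lt_0_compat; auto).
  exists (fun y => sin (L * b * (1 - y) + C3) / S / N),
    (fun y => - (L * b) * cos (L * b * (1 - y) + C3) / S / N),
    (fun y => - (L * b)^2 * sin (L * b * (1 - y) + C3) / S / N),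
    (fun y => exp (L * sg * (1 - y)) / N),
    (fun y => - (L * sg) * exp (L * sg * (1 - y)) / N),
    (fun y => (L * sg)^2 * exp (L * sg * (1 - y)) / N).
  unfold Pfacts.
  split; [|split; [|split; [|split; [|split; [|split; [|split; [|split; [|split; [|split; [|split; [|split; [|split]]]]]]]]]]]].
  - rewrite HN. replace (1 - 0) with 1 by ring. rewrite Rmult_1_r. field. lra.
  - replace (- - r1 - r1) with 0 by ring. rewrite sqrt_0, Rmult_0_r.
    replace (1 - 0) with 1 by ring. rewrite Rmult_1_r.
    assert (0 <= L * b * cos (L * b + C3) / S / N).
    { unfold Rdiv. repeat apply Rmult_le_pos; try lra; left; apply Rinv_0_lt_compat; lra. }
    unfold Rdiv in *. lra.
  - replace (1 - 1) with 0 by ring. rewrite !Rmult_0_r, Rplus_0_l, exp_0. fold S. field. lra.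
  - replace (1 - 1) with 0 by ring. rewrite !Rmult_0_r, Rplus_0_l, exp_0. fold S.
    rewrite Hcos. right. field. lra.
  - intros y Hy. unfold Rdiv. apply Rmult_le_pos; [|left; apply Rinv_0_lt_compat; lra].
    apply Rmult_le_pos; [|left; apply Rinv_0_lt_compat; lra].
    apply sin_ge_0. assert (0 <= L * b * (1 - y)) by (apply Rmult_le_pos; lra). lra.
    assert (L * b * (1 - y) <= L * b) by nra. pose proof PI_RGT_0. lra.
  - intros y Hy. unfold Rdiv. apply Rmult_le_pos; [left; apply exp_pos|left; apply Rinv_0_lt_compat; lra].
  - intro y. auto_derive. auto. unfold Rminus. field. lra.
  - intro y. auto_derive. auto. unfold Rminus. field. lra.
  - intro y. auto_derive. auto. unfold Rminus. field. lra.
  - intro y. auto_derive. auto. unfold Rminus. field. lra.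
  - intro y. replace (r2 + - r1) with (b * b) by lra. field. lra.
  - intro y. replace (r3 + - r1) with (- (sg * sg)) by lra. field. lra.
  - intros y Hy. unfold phi1. destruct (Rle_dec L (Lbar r1 r2 r3)); [|lra].
    destruct (Rlt_dec r1 r3); [lra|]. destruct (Rlt_dec r3 r1); [|lra].
    fold N. unfold phi_case2. fold b C3 S sg.
    destruct (Rle_dec (1 - y) 0); [lra|].
    destruct (Rlt_dec (1 - y) 1); [reflexivity|].
    assert (y = 0) by lra. subst y. replace (1 - 0 - 1) with 0 by ring. rewrite Rmult_0_r, Rmult_0_r, Rplus_0_r.
    replace (1 - 0) with 1 by ring. rewrite Rmult_1_r. reflexivity.
  - intros y Hy. unfold phi1. destruct (Rle_dec L (Lbar r1 r2 r3)); [|lra].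
    destruct (Rlt_dec r1 r3); [lra|]. destruct (Rlt_dec r3 r1); [|lra].
    fold N. unfold phi_case2. fold b C3 S sg.
    destruct (Rle_dec (1 - y) 0); [reflexivity|lra].
Qed.

Lemma case1 r1 r2 r3 L l : 0 < r1 -> 0 < r3 -> Rmax r1 r3 < r2 -> 0 < L ->
  Lbar r1 r2 r3 < L -> - r2 < l -> l < Rmin (- Rmax r1 r3) (PI ^ 2 / L ^ 2 - r2) ->
  cos (L * sqrt (r2 + l)) / sin (L * sqrt (r2 + l)) =
   (r2 + l - sqrt ((r1 + l) * (r3 + l))) /
   (sqrt (r2 + l) * (sqrt (- r1 - l) + sqrt (- r3 - l))) ->
  exists PM PM1 PM2 PR PR1 PR2,
    Pfacts r2 r3 L l (sqrt (- l - r1)) (phi1 r1 r2 r3 L l) PM PM1 PM2 PR PR1 PR2.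
Proof.
  intros Hr1 Hr3 Hmax HL HLb Hl1 Hl2 Hcot.
  pose proof (Rmax_l r1 r3). pose proof (Rmax_r r1 r3).
  pose proof (Rmin_l (- Rmax r1 r3) (PI ^ 2 / L ^ 2 - r2)).
  pose proof (Rmin_r (- Rmax r1 r3) (PI ^ 2 / L ^ 2 - r2)).
  set (a := sqrt (- r1 - l)) in *. set (b := sqrt (r2 + l)) in *. set (g := sqrt (- r3 - l)) in *.
  assert (Ha : 0 < a) by (apply sqrt_lt_R0; lra).
  assert (Ha2 : a * a = - r1 - l) by (apply sqrt_sqrt; lra).
  assert (Hb : 0 < b) by (apply sqrt_lt_R0; lra).
  assert (Hb2 : b * b = r2 + l) by (apply sqrt_sqrt; lra).
  assert (Hg : 0 < g) by (apply sqrt_lt_R0; lra).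
  assert (Hg2 : g * g = - r3 - l) by (apply sqrt_sqrt; lra).
  set (C3 := arccot (sqrt ((- r1 - l) / (r2 + l)))).
  assert (HC3 : C3 = arccot (a / b)) by (unfold C3; rewrite sqrt_div by lra; reflexivity).
  assert (Hab : 0 < a / b) by (apply Rdiv_lt_0_compat; auto).
  destruct (arccot_facts _ Hab) as [[Hc1 Hc2] [HS Hcos]]. rewrite <- HC3 in Hc1, Hc2, HS, Hcos.
  set (S := sin C3) in *.
  set (th := L * b) in *.
  assert (Hth0 : 0 < th) by (unfold th; nra).
  pose proof PI_RGT_0 as HPI.
  assert (HthPI : th < PI).
  { assert (r2 + l < PI ^ 2 / L ^ 2) by lra.
    assert (th * th < PI * PI).
    { unfold th. replace (L * b * (L * b)) with (L ^ 2 * (r2 + l)) by (rewrite <- Hb2; ring).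
      apply Rmult_lt_compat_l with (r := L ^ 2) in H3; [|nra].
      replace (L ^ 2 * (PI ^ 2 / L ^ 2)) with (PI * PI) in H3 by (field; lra). lra. }
    nra. }
  assert (Hsth : 0 < sin th) by (apply sin_gt_0; lra).
  assert (Hsq : sqrt ((r1 + l) * (r3 + l)) = a * g).
  { replace ((r1 + l) * (r3 + l)) with ((- r1 - l) * (- r3 - l)) by ring.
    apply sqrt_mult; lra. }
  rewrite Hsq in Hcot.
  set (K := (b * b - a * g) / (b * (a + g))).
  assert (HcosT : cos th = sin th * K).
  { unfold K. rewrite <- Hb2 in Hcot. apply (f_equal (fun z => z * sin th)) in Hcot.
    unfold Rdiv in Hcot. rewrite Rmult_assoc, Rinv_l, Rmult_1_r in Hcot by lra.
    rewrite Hcot. field. lra. }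
  assert (Hsp : sin (th + C3) = sin th * S * (a * a + b * b) / (b * (a + g))).
  { rewrite sin_plus. fold S. rewrite Hcos, HcosT. unfold K. field. lra. }
  assert (Hid : b * cos (th + C3) = - g * sin (th + C3)).
  { rewrite cos_plus, Hsp. fold S. rewrite Hcos, HcosT. unfold K. field. lra. }
  assert (Hsp0 : 0 < sin (th + C3)).
  { rewrite Hsp. apply Rdiv_lt_0_compat; [|nra]. apply Rmult_lt_0_compat; [|nra]. nra. }
  assert (HthC : th + C3 < PI).
  { destruct (Rlt_le_dec (th + C3) PI) as [h|h]; auto. exfalso.
    destruct h as [h|h].
    - assert (sin (th + C3) < 0) by (apply sin_lt_0; lra). lra.
    - rewrite <- h, sin_PI in Hsp0. lra. }
  set (S1 := sin (th + C3) / S).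
  assert (HS1 : 0 < S1) by (apply Rdiv_lt_0_compat; auto).
  exists (fun y => sin (L * b * y + C3) / S), (fun y => L * b * cos (L * b * y + C3) / S),
    (fun y => - (L * b)^2 * sin (L * b * y + C3) / S),
    (fun y => S1 * exp (- L * g * (y - 1))), (fun y => S1 * (- L * g) * exp (- L * g * (y - 1))),
    (fun y => S1 * (L * g)^2 * exp (- L * g * (y - 1))).
  unfold Pfacts.
  split; [|split; [|split; [|split; [|split; [|split; [|split; [|split; [|split; [|split; [|split; [|split; [|split]]]]]]]]]]]].
  - rewrite Rmult_0_r, Rplus_0_l. fold S. field. lra.
  - rewrite Rmult_0_r, Rplus_0_l. fold S. rewrite Hcos.
    replace (- l - r1) with (- r1 - l) by ring. fold a. right. field. lra.
  - fold th. rewrite Rmult_1_r. unfold S1. replace (1 - 1) with 0 by ring.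
    rewrite Rmult_0_r, exp_0. ring.
  - fold th. rewrite Rmult_1_r. unfold S1. replace (1 - 1) with 0 by ring.
    rewrite Rmult_0_r, exp_0. right.
    apply Rmult_eq_reg_r with S; [|lra]. unfold Rdiv.
    rewrite !Rmult_assoc, Rinv_l by lra. rewrite Rmult_1_r.
    replace (L * (b * cos (th + C3))) with (L * b * cos (th + C3)) by ring.
    replace (th * cos (th + C3)) with (L * (b * cos (th + C3))) by (unfold th; ring). rewrite Hid. field. lra.
  - intros y Hy. apply Rmult_le_pos; [|left; apply Rinv_0_lt_compat; lra].
    apply sin_ge_0. apply Rplus_le_le_0_compat; [repeat apply Rmult_le_pos; lra|lra]. apply Rle_trans with (th + C3); [apply Rplus_le_compat_r; unfold th; assert (0 < L * b) by (apply Rmult_lt_0_compat; lra); nra | lra].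

  - intros y Hy. apply Rmult_le_pos; [lra|left; apply exp_pos].
  - intro y. auto_derive. auto. field. lra.
  - intro y. auto_derive. auto. field. lra.
  - intro y. auto_derive. auto. unfold Rminus. ring.
  - intro y. auto_derive. auto. unfold Rminus. ring.
  - intro y. replace (r2 + l) with (b * b) by lra. field. lra.
  - intro y. replace (r3 + l) with (- (g * g)) by lra. ring.
  - intros y Hy. unfold phi1. destruct (Rle_dec L (Lbar r1 r2 r3)); [lra|].
    unfold phi_case1. fold a b g C3 S.
    destruct (Rle_dec y 0).
    + assert (y = 0) by lra. subst y. rewrite !Rmult_0_r, exp_0, Rplus_0_l. fold S. field. lra.
    + destruct (Rlt_dec y 1); [reflexivity|lra].
  - intros y Hy. unfold phi1. destruct (Rle_dec L (Lbar r1 r2 r3)); [lra|].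
    unfold phi_case1. fold a b g C3 S.
    destruct (Rle_dec y 0); [lra|]. destruct (Rlt_dec y 1); [lra|]. reflexivity.
Qed.


Theorem lemma3p3
  (r1 r2 r3 L M : R) (l1 cA : R) (T : Rbar) (A : R -> R) (f : R -> R -> R -> R)
  (Hr1 : 0 < r1) (Hr2 : 0 < r2) (Hr3 : 0 < r3) (HL : 0 < L) (HM : 0 < M)
  (Hr2max : Rmax r1 r3 < r2)
  (Hl1 : lambda1_spec r1 r2 r3 L l1)
  (HcA : 2 * sqrt (- l1) < cA)
  (HT : Rbar_lt (Finite 0) T)
  (HAc : forall t, continuous A t)
  (HA0 : forall t, 0 <= A t)
  (HAT : forall t, 0 <= t -> Rbar_lt (Finite t) T -> A t = cA * t)
  (Hfbnd : forall K, exists B, forall t x u, Rabs u <= K -> Rabs (f t x u) <= B)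
  (HfC2 : forall t x u, ex_derive (f t x) u /\ ex_derive (Derive (f t x)) u /\
                        continuous (Derive_n (f t x) 2) u)
  (Hf0 : forall t x, f t x 0 = 0)
  (Hfd0 : forall t x, Derive (f t x) 0 = rfun r1 r2 r3 L A t x)
  (HfKPP : forall t x u, 0 <= u ->
     rfun r1 r2 r3 L A t x * u >= f t x u /\
     f t x u >= rfun r1 r2 r3 L A t x * u - M * u ^ 2)
  (Hfneg : forall t x u, 1 < u -> f t x u < 0) :
  forall C : R, 1 <= C ->
    gen_supersol f T (fun t x => C * ubar r1 r2 r3 L l1 cA t x).
Proof.
  intros C HC.
  pose proof (Rmax_l r1 r3). pose proof (Rmax_r r1 r3).
  assert (HP : 0 <= - l1 - r1 /\ exists PM PM1 PM2 PR PR1 PR2,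
     Pfacts r2 r3 L l1 (sqrt (- l1 - r1)) (phi1 r1 r2 r3 L l1) PM PM1 PM2 PR PR1 PR2).
  { destruct Hl1 as [[HLb Hl]|[HLb [Hla [Hlb Hcot]]]].
    - destruct (total_order_T r1 r3) as [[H13|H13]|H13].
      + rewrite Rmax_right in Hl by lra. subst l1. split. lra.
        apply case2; auto; lra.
      + exfalso. unfold Lbar in HLb. destruct (Req_EM_T r1 r3); [lra|]. contradiction.
      + rewrite Rmax_left in Hl by lra. subst l1. split. lra.
        apply case3; auto; lra.
    - split.
      + pose proof (Rmin_l (- Rmax r1 r3) (PI ^ 2 / L ^ 2 - r2)). lra.
      + apply case1; auto. }
  destruct HP as [Hs0 [PM [PM1 [PM2 [PR [PR1 [PR2 HPf]]]]]]].
  destruct HPf as [F1 [F2 [F3 [F4 [F5 [F6 [F7 [F8 [F9 [F10 [F11 [F12 [F13 F14]]]]]]]]]]]]].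
  destruct (cfacts r1 l1 cA Hr1 Hs0 HcA) as [G1 [G2 [G3 [G4 G5]]]].
  exact (generic r1 r2 r3 L l1 cA (cspeed r1 l1 cA) (lam r1 (cspeed r1 l1 cA)) C (sqrt (- l1 - r1))
    T A f (phi1 r1 r2 r3 L l1) PM PM1 PM2 PR PR1 PR2 HL HC HAT
    (fun t x u Hu => proj1 (HfKPP t x u Hu)) Hfneg G1 G2 G3 G4 G5
    F1 F2 F3 F4 F5 F6 F7 F8 F9 F10 F11 F12 F13 F14).
Qed.
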